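(* Let $d\geq 2$ be an integer, let $\mathbf{k}=(k^1,\dots,k^d)\in\mathbb{R}^d$ with $\mathbf{k}\neq 0$, and write $k_i=k^i$, $k^2=\delta_{ij}k^ik^j$ (repeated indices summed over $1,\dots,d$). Let $\varphi_{ij}(z)$, $i,j=1,\dots,d$, be twice differentiable complex-valued functions of $z\in(0,\infty)$ with $\varphi_{ij}=\varphi_{ji}$, and set $\varphi_0=\delta^{ij}\varphi_{ij}$. Define the differential operator $$\hat E_s=\partial_z^2+\frac{5-d}{z}\partial_z+\frac{4-2d}{z^2}-k^2,$$ and suppose that for all $i,j$ $$\hat E_s\varphi_{ij}= -k_jk^m\varphi_{im}-k_ik^m\varphi_{mj}+k_ik_j\varphi_0 .$$ Define $$\bar\varphi_{ij}=\varphi_{ij}-\frac{k_ik^m}{k^2}\varphi_{mj}-\frac{k_jk^m}{k^2}\varphi_{mi}+\frac{k_ik_jk^mk^n}{k^4}\varphi_{mn}-\frac{1}{d-1}\Big(\delta_{ij}-\frac{k_ik_j}{k^2}\Big)\Big(\varphi_0-\frac{k^mk^n}{k^2}\varphi_{mn}\Big).$$ Then $\bar\varphi_{ij}$ is traceless and transverse, i.e. $\delta^{ij}\bar\varphi_{ij}=0$ and $k^i\bar\varphi_{ij}=0$, and it satisfies the homogeneous equation $\hat E_s\bar\varphi_{ij}(z)=0$ for all $i,j$.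
   Context: This is the momentum-space (Fourier transformed in the boundary coordinates $x^i$, with $\partial_m\to ik_m$) form of the equation for the symmetric component $\varphi_{ij}$ of a hook-type gauge field in Euclidean $AdS_{d+1}$ in Poincaré coordinates, $z$ being the radial coordinate; indices are raised and lowered with the Euclidean metric $\delta_{ij}$, and $\mathbf{k}$ is held fixed. *)

(* Defs.v *)
From Stdlib Require Import Reals.
From Coquelicot Require Import Coquelicot.

Open Scope R_scope.

(* Sum over an index m = 0, ..., d-1 (indices 1..d of the paper shifted by one). *)
Definition sumR (d : nat) (f : nat -> R) : R := sum_n f (pred d).
Definition sumC (d : nat) (f : nat -> C) : C := sum_n f (pred d).

Definition ksq (d : nat) (k : nat -> R) : R := sumR d (fun i => k i * k i).

Definition trC (d : nat) (phi : nat -> nat -> R -> C) (z : R) : C :=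
  sumC d (fun m => phi m m z).

Definition kkphi (d : nat) (k : nat -> R) (phi : nat -> nat -> R -> C) (z : R) : C :=
  sumC d (fun m => sumC d (fun n => (RtoC (k m * k n) * phi m n z)%C)).

(* The operator  E_s f = f'' + (5-d)/z f' + ((4-2d)/z^2 - k^2) f,
   given the first derivative f1 and second derivative f2 of f. *)
Definition Es (d : nat) (k : nat -> R) (f f1 f2 : R -> C) (z : R) : C :=
  (f2 z + RtoC ((5 - INR d) / z) * f1 z
   + RtoC ((4 - 2 * INR d) / (z * z) - ksq d k) * f z)%C.

Definition kron (i j : nat) : R := if Nat.eqb i j then 1 else 0.

Definition phibar (d : nat) (k : nat -> R) (phi : nat -> nat -> R -> C)
  (i j : nat) (z : R) : C :=
  let k2 := ksq d k in
  (phi i j z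
   - sumC d (fun m => RtoC (k i * k m / k2) * phi m j z)
   - sumC d (fun m => RtoC (k j * k m / k2) * phi m i z)
   + RtoC (k i * k j / (k2 * k2)) * kkphi d k phi z
   - RtoC (1 / (INR d - 1) * (kron i j - k i * k j / k2))
       * (trC d phi z - RtoC (1 / k2) * kkphi d k phi z))%C.

(* Main.v *)
From Stdlib Require Import Reals Lia Lra.
From Coquelicot Require Import Coquelicot.
Require Import Defs.
Open Scope R_scope.

Lemma sumC_ext d (f g : nat -> C) : (0 < d)%nat ->
  (forall m, (m < d)%nat -> f m = g m) -> sumC d f = sumC d g.
Proof. intros Hd H. unfold sumC. apply sum_n_ext_loc. intros; apply H; lia. Qed.

Lemma sumC_ext' d (f g : nat -> C) : (forall m, f m = g m) -> sumC d f = sumC d g.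
Proof. intros H. unfold sumC. apply sum_n_ext. exact H. Qed.

Lemma sumC_plus d (f g : nat -> C) : sumC d (fun m => f m + g m)%C = (sumC d f + sumC d g)%C.
Proof. unfold sumC. exact (sum_n_plus f g _). Qed.

Lemma sumC_scal d (f : nat -> C) c : sumC d (fun m => c * f m)%C = (c * sumC d f)%C.
Proof. unfold sumC. exact (@sum_n_mult_l C_Ring c f _). Qed.

Lemma sumC_lin d (f g h : nat -> C) a b c :
  sumC d (fun m => a * f m + b * g m + c * h m)%C = (a * sumC d f + b * sumC d g + c * sumC d h)%C.
Proof. rewrite !sumC_plus, !sumC_scal. reflexivity. Qed.

Lemma sumC_lin1 d (f g h : nat -> C) b c :
  sumC d (fun m => f m + b * g m + c * h m)%C = (sumC d f + b * sumC d g + c * sumC d h)%C.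
Proof. rewrite !sumC_plus, !sumC_scal. reflexivity. Qed.

Lemma RtoC_sum d (f : nat -> R) : RtoC (sumR d f) = sumC d (fun m => RtoC (f m)).
Proof.
unfold sumR, sumC. induction (pred d).
- now rewrite !sum_O.
- rewrite !sum_Sn, <- IHn. apply RtoC_plus.
Qed.

Lemma sum_ge_term (f : nat -> R) N i : (forall m, 0 <= f m) -> (i <= N)%nat -> f i <= sum_n f N.
Proof.
intros Hf. induction N; intros Hi.
- rewrite sum_O. replace i with 0%nat by lia. lra.
- rewrite sum_Sn. change (f i <= sum_n f N + f (S N)).
  destruct (Nat.eq_dec i (S N)) as [->|Hne].
  + assert (0 <= sum_n f N). { clear IHN Hi. induction N. rewrite sum_O; auto. rewrite sum_Sn. change (0 <= sum_n f N + f (S N)). specialize (Hf (S N)); lra. }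
    lra.
  + assert (f i <= sum_n f N) by (apply IHN; lia). specialize (Hf (S N)); lra.
Qed.

Lemma ksq_nz d k : (exists i, (i < d)%nat /\ k i <> 0) -> ksq d k <> 0.
Proof.
intros [i [Hi Hk]]. unfold ksq, sumR.
assert (k i * k i <= sum_n (fun m => k m * k m) (pred d)).
{ apply (sum_ge_term (fun m => k m * k m)). intros; nra. lia. }
assert (0 < k i * k i) by nra. lra.
Qed.

Definition AF d k (F : nat -> nat -> C) j := sumC d (fun m => RtoC (k m) * F m j)%C.
Definition TF d (F : nat -> nat -> C) := sumC d (fun m => F m m).
Definition KF d k (F : nat -> nat -> C) := sumC d (fun m => sumC d (fun n => RtoC (k m * k n) * F m n))%C.
Definition form d k (F : nat -> nat -> C) i j :=
  (F i j - RtoC (k i / ksq d k) * AF d k F j - RtoC (k j / ksq d k) * AF d k F i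
   + RtoC (k i * k j / (ksq d k * ksq d k)) * KF d k F
   - RtoC (1 / (INR d - 1) * (kron i j - k i * k j / ksq d k)) * (TF d F - RtoC (1 / ksq d k) * KF d k F))%C.

Lemma phibar_form d k phi i j z : phibar d k phi i j z = form d k (fun a b => phi a b z) i j.
Proof.
assert (H : forall x y, sumC d (fun m => RtoC (k x * k m / ksq d k) * phi m y z)%C
   = (RtoC (k x / ksq d k) * sumC d (fun m => RtoC (k m) * phi m y z))%C).
{ intros. rewrite <- sumC_scal. apply sumC_ext'; intros.
  rewrite Cmult_assoc, <- RtoC_mult. f_equal. f_equal. unfold Rdiv; ring. }
unfold phibar, form, AF, TF, KF, kkphi, trC. rewrite !H. reflexivity.
Qed.

Section Lin.
Variables (d : nat) (k : nat -> R) (F2 F1 F0 : nat -> nat -> C) (c1 c2 : C).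
Let Q := fun a b => (F2 a b + c1 * F1 a b + c2 * F0 a b)%C.

Lemma AF_lin j : AF d k Q j = (AF d k F2 j + c1 * AF d k F1 j + c2 * AF d k F0 j)%C.
Proof. unfold AF. rewrite <- sumC_lin1. apply sumC_ext'; intros; unfold Q; ring. Qed.
Lemma TF_lin : TF d Q = (TF d F2 + c1 * TF d F1 + c2 * TF d F0)%C.
Proof. unfold TF. rewrite <- sumC_lin1. apply sumC_ext'; intros; unfold Q; ring. Qed.
Lemma KF_lin : KF d k Q = (KF d k F2 + c1 * KF d k F1 + c2 * KF d k F0)%C.
Proof. unfold KF. rewrite <- sumC_lin1. apply sumC_ext'; intros.
  rewrite <- sumC_lin1. apply sumC_ext'; intros; unfold Q; ring. Qed.
Lemma form_lin i j : form d k Q i j = (form d k F2 i j + c1 * form d k F1 i j + c2 * form d k F0 i j)%C.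
Proof. unfold form. rewrite !AF_lin, TF_lin, KF_lin. unfold Q. ring. Qed.
End Lin.

Lemma form_ext d k F G i j : (0 < d)%nat -> (i < d)%nat -> (j < d)%nat ->
  (forall a b, (a < d)%nat -> (b < d)%nat -> F a b = G a b) -> form d k F i j = form d k G i j.
Proof.
intros Hd Hi Hj H.
assert (HA : forall x, (x < d)%nat -> AF d k F x = AF d k G x).
{ intros x Hx; unfold AF; apply sumC_ext; auto; intros; rewrite H; auto. }
assert (HT : TF d F = TF d G). { unfold TF; apply sumC_ext; auto. }
assert (HK : KF d k F = KF d k G).
{ unfold KF; apply sumC_ext; auto; intros; apply sumC_ext; auto; intros; rewrite H; auto. }
unfold form. rewrite (HA i), (HA j), HT, HK, H; auto.
Qed.

Section Core.
Variables (d : nat) (k : nat -> R) (P0 : nat -> nat -> C).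
Hypothesis Hd : (2 <= d)%nat.
Hypothesis Hsym : forall a b, (a < d)%nat -> (b < d)%nat -> P0 a b = P0 b a.
Let A0 a := AF d k P0 a.
Let T0 := TF d P0.
Let S := KF d k P0.
Let SK := sumC d (fun m => RtoC (k m) * RtoC (k m))%C.
Definition Gf a b := (- RtoC (k b) * A0 a - RtoC (k a) * A0 b + RtoC (k a) * RtoC (k b) * T0)%C.

Lemma sum_kA : sumC d (fun m => RtoC (k m) * A0 m)%C = S.
Proof.
unfold S, KF. apply sumC_ext; [lia|]. intros m Hm. unfold A0, AF. rewrite <- sumC_scal.
apply sumC_ext; [lia|]. intros n Hn. rewrite Hsym by auto. rewrite RtoC_mult. ring.
Qed.

Lemma AF_G j : AF d k Gf j = (- RtoC (k j) * S - SK * A0 j + RtoC (k j) * SK * T0)%C.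
Proof.
unfold AF. transitivity (sumC d (fun m => (- RtoC (k j)) * (RtoC (k m) * A0 m) + (- A0 j) * (RtoC (k m) * RtoC (k m)) + (RtoC (k j) * T0) * (RtoC (k m) * RtoC (k m)))%C).
{ apply sumC_ext'; intros; unfold Gf; ring. }
rewrite sumC_lin, sum_kA. fold SK. ring.
Qed.

Lemma TF_G : TF d Gf = (-(2) * S + SK * T0)%C.
Proof.
unfold TF. transitivity (sumC d (fun m => (-(2)) * (RtoC (k m) * A0 m) + T0 * (RtoC (k m) * RtoC (k m)) + 0 * (fun _ => 0%C) m)%C).
{ apply sumC_ext'; intros; unfold Gf; ring. }
rewrite sumC_lin, sum_kA. fold SK. ring.
Qed.

Lemma KF_G : KF d k Gf = (-(2) * SK * S + SK * SK * T0)%C.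
Proof.
unfold KF. transitivity (sumC d (fun m => (- SK) * (RtoC (k m) * A0 m) + (- S) * (RtoC (k m) * RtoC (k m)) + (T0 * SK) * (RtoC (k m) * RtoC (k m)))%C).
{ apply sumC_ext'; intros m.
  transitivity (sumC d (fun n => (- (RtoC (k m) * A0 m)) * (RtoC (k n) * RtoC (k n)) + (- (RtoC (k m) * RtoC (k m))) * (RtoC (k n) * A0 n) + (RtoC (k m) * RtoC (k m) * T0) * (RtoC (k n) * RtoC (k n)))%C).
  { apply sumC_ext'; intros; unfold Gf; rewrite RtoC_mult; ring. }
  rewrite sumC_lin, sum_kA. fold SK. ring. }
rewrite sumC_lin, sum_kA. fold SK. ring.
Qed.

Lemma form_G i j : (exists i, (i < d)%nat /\ k i <> 0) -> form d k Gf i j = 0%C.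
Proof.
intros Hk.
assert (HK : ksq d k <> 0).
{ now apply ksq_nz. }
assert (HSK : SK = RtoC (ksq d k)).
{ unfold SK, ksq. rewrite RtoC_sum. apply sumC_ext'; intros; now rewrite RtoC_mult. }
assert (Hd1 : INR d - 1 <> 0).
{ assert (1 < INR d). { replace 1 with (INR 1) by reflexivity. apply lt_INR. lia. } lra. }
unfold form. rewrite !AF_G, TF_G, KF_G, HSK. unfold Gf.
assert (HKK : ksq d k * ksq d k <> 0) by (apply Rmult_integral_contrapositive; auto).
rewrite !RtoC_mult, !RtoC_div by assumption.
rewrite !RtoC_mult, !RtoC_minus, !RtoC_div by assumption.
rewrite !RtoC_mult.
field. split.
- intro H; apply HK. apply (f_equal fst) in H. simpl in H. exact H.
- intro H; apply Hd1. apply (f_equal fst) in H. simpl in H. lra.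
Qed.
End Core.

Lemma kron_sum_lt (a : nat -> R) j N : (N < j)%nat -> sum_n (fun i => a i * kron i j) N = 0.
Proof.
induction N; intros H.
- rewrite sum_O. change (a 0%nat * kron 0 j = 0). unfold kron. destruct (Nat.eqb_spec 0 j); [lia|]. ring.
- rewrite sum_Sn. change (sum_n (fun i => a i * kron i j) N + a (S N) * kron (S N) j = 0).
  rewrite IHN by lia. unfold kron. destruct (Nat.eqb_spec (S N) j); [lia|]. ring.
Qed.

Lemma kron_sum (a : nat -> R) j N : (j <= N)%nat -> sum_n (fun i => a i * kron i j) N = a j.
Proof.
induction N; intros H.
- rewrite sum_O. replace j with 0%nat by lia. change (a 0%nat * kron 0 0 = a 0%nat). unfold kron; simpl; ring.
- rewrite sum_Sn. change (sum_n (fun i => a i * kron i j) N + a (S N) * kron (S N) j = a j).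
  destruct (Nat.eq_dec j (S N)) as [->|Hne].
  + rewrite kron_sum_lt by lia. unfold kron. rewrite Nat.eqb_refl. ring.
  + rewrite IHN by lia. unfold kron. destruct (Nat.eqb_spec (S N) j); [lia|]. ring.
Qed.

Lemma sum_one N : sum_n (fun _ : nat => 1) N = INR (S N).
Proof.
induction N.
- rewrite sum_O. reflexivity.
- rewrite sum_Sn. change (sum_n (fun _ : nat => 1) N + 1 = INR (S (S N))).
  rewrite IHN. rewrite (S_INR (S N)). ring.
Qed.

Lemma sumC_kron d k j : (j < d)%nat -> sumC d (fun i => RtoC (k i) * RtoC (kron i j))%C = RtoC (k j).
Proof.
intros H. transitivity (RtoC (sumR d (fun i => k i * kron i j))).
- rewrite RtoC_sum. apply sumC_ext'; intros; now rewrite RtoC_mult.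
- unfold sumR. rewrite kron_sum by lia. reflexivity.
Qed.

Lemma sumC_kron_diag d : (0 < d)%nat -> sumC d (fun m => RtoC (kron m m)) = RtoC (INR d).
Proof.
intros H. rewrite <- RtoC_sum. f_equal. unfold sumR.
rewrite (sum_n_ext _ (fun _ => 1)). rewrite sum_one. f_equal; lia.
intros; unfold kron; now rewrite Nat.eqb_refl.
Qed.

Lemma sumC_lin4 d (f g h l : nat -> C) b c e :
  sumC d (fun m => f m + b * g m + c * h m + e * l m)%C = (sumC d f + b * sumC d g + c * sumC d h + e * sumC d l)%C.
Proof. rewrite !sumC_plus, !sumC_scal. reflexivity. Qed.

Section TT.
Variables (d : nat) (k : nat -> R) (P0 : nat -> nat -> C).
Hypothesis Hd : (2 <= d)%nat.
Hypothesis Hsym : forall a b, (a < d)%nat -> (b < d)%nat -> P0 a b = P0 b a.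
Hypothesis Hk : exists i, (i < d)%nat /\ k i <> 0.

Ltac convC HK Hd1 HKK :=
  rewrite ?RtoC_mult, ?RtoC_div by assumption;
  rewrite ?RtoC_mult, ?RtoC_minus, ?RtoC_div by assumption;
  rewrite ?RtoC_mult.

Lemma nzC (x : R) : x <> 0 -> RtoC x <> 0%C.
Proof. intros H E. apply H. apply (f_equal fst) in E. exact E. Qed.

Lemma trace_form : TF d (form d k P0) = 0%C.
Proof.
assert (HK : ksq d k <> 0) by now apply ksq_nz.
assert (Hd1 : INR d - 1 <> 0).
{ assert (1 < INR d). { replace 1 with (INR 1) by reflexivity. apply lt_INR. lia. } lra. }
assert (HKK : ksq d k * ksq d k <> 0) by (apply Rmult_integral_contrapositive; auto).
set (A := AF d k P0). set (T := TF d P0). set (S := KF d k P0). set (K := ksq d k).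
unfold TF.
transitivity (sumC d (fun m => P0 m m + (-(2) / RtoC K) * (RtoC (k m) * A m)
   + (S / (RtoC K * RtoC K) + 1 / (RtoC (INR d) - 1) * (1 / RtoC K) * (T - S / RtoC K)) * (RtoC (k m) * RtoC (k m))
   + (- (1 / (RtoC (INR d) - 1)) * (T - S / RtoC K)) * RtoC (kron m m))%C).
{ apply sumC_ext'; intros m. unfold form. fold A S T K. convC HK Hd1 HKK. field.
  split; [apply nzC; auto|]. intro E; apply Hd1. apply (f_equal fst) in E. simpl in E. lra. }
rewrite sumC_lin4. unfold A, S, T, K in *.
rewrite (sum_kA d k P0 Hd Hsym).
rewrite sumC_kron_diag by lia.
assert (HSK : sumC d (fun m => RtoC (k m) * RtoC (k m))%C = RtoC (ksq d k)).
{ unfold ksq. rewrite RtoC_sum. apply sumC_ext'; intros; now rewrite RtoC_mult. }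
rewrite HSK. idtac.
clear A S T K. change (sumC d (fun m => P0 m m)) with (TF d P0). field.
split; [apply nzC; auto|]. intro E; apply Hd1. apply (f_equal fst) in E. simpl in E. lra.
Qed.

Lemma transverse_form j : (j < d)%nat -> sumC d (fun i => RtoC (k i) * form d k P0 i j)%C = 0%C.
Proof.
intros Hj.
assert (HK : ksq d k <> 0) by now apply ksq_nz.
assert (Hd1 : INR d - 1 <> 0).
{ assert (1 < INR d). { replace 1 with (INR 1) by reflexivity. apply lt_INR. lia. } lra. }
assert (HKK : ksq d k * ksq d k <> 0) by (apply Rmult_integral_contrapositive; auto).
set (A := AF d k P0). set (T := TF d P0). set (S := KF d k P0). set (K := ksq d k).
transitivity (sumC d (fun i => RtoC (k i) * P0 i j
   + (- A j / RtoC K + RtoC (k j) * S / (RtoC K * RtoC K) + 1 / (RtoC (INR d) - 1) * (RtoC (k j) / RtoC K) * (T - S / RtoC K)) * (RtoC (k i) * RtoC (k i))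
   + (- RtoC (k j) / RtoC K) * (RtoC (k i) * A i)
   + (- (1 / (RtoC (INR d) - 1)) * (T - S / RtoC K)) * (RtoC (k i) * RtoC (kron i j)))%C).
{ apply sumC_ext'; intros m. unfold form. fold A S T K. convC HK Hd1 HKK. field.
  split; [apply nzC; auto|]. intro E; apply Hd1. apply (f_equal fst) in E. simpl in E. lra. }
rewrite sumC_lin4. unfold A, S, T, K in *.
change (sumC d (fun i => RtoC (k i) * P0 i j)%C) with (AF d k P0 j).
rewrite (sum_kA d k P0 Hd Hsym).
rewrite sumC_kron by auto.
assert (HSK : sumC d (fun m => RtoC (k m) * RtoC (k m))%C = RtoC (ksq d k)).
{ unfold ksq. rewrite RtoC_sum. apply sumC_ext'; intros; now rewrite RtoC_mult. }
rewrite HSK. field.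
split; [apply nzC; auto|]. intro E; apply Hd1. apply (f_equal fst) in E. simpl in E. lra.
Qed.
End TT.
Lemma der_cst (f : R -> C) z l c : is_derive (V:=C_R_NormedModule) f z l -> is_derive (V:=C_R_NormedModule) (fun x => RtoC c * f x)%C z (RtoC c * l)%C.
Proof.
intros H.
apply (is_derive_ext (fun x => scal c (f x))). { intros; apply scal_R_Cmult. }
rewrite <- scal_R_Cmult.
unfold is_derive in *.
eapply filterdiff_ext_lin.
apply (filterdiff_scal_r_fct c f _ Rmult_comm H).
intros y; simpl. rewrite !scal_assoc. f_equal. unfold mult; simpl. apply Rmult_comm.
Qed.
Lemma der_sum (f : nat -> R -> C) (f' : nat -> C) z N :
  (forall m, (m <= N)%nat -> is_derive (V:=C_R_NormedModule) (f m) z (f' m)) ->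
  is_derive (V:=C_R_NormedModule) (fun x => sum_n (fun m => f m x) N) z (sum_n f' N).
Proof.
induction N; intros H.
- apply (is_derive_ext (f 0%nat)). { intros; now rewrite sum_O. } rewrite sum_O. apply H; auto.
- apply (is_derive_ext (fun x => plus (sum_n (fun m => f m x) N) (f (S N) x))). { intros; now rewrite sum_Sn. }
  rewrite sum_Sn. apply (is_derive_plus (V:=C_R_NormedModule)). apply IHN; intros; apply H; lia. apply H; lia.
Qed.
Lemma der_phibar d k (phi phi1 : nat -> nat -> R -> C) i j z :
  (2 <= d)%nat -> (i < d)%nat -> (j < d)%nat ->
  (forall a b, (a < d)%nat -> (b < d)%nat -> is_derive (V:=C_R_NormedModule) (phi a b) z (phi1 a b z)) ->
  is_derive (V:=C_R_NormedModule) (phibar d k phi i j) z (phibar d k phi1 i j z).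
Proof.
intros Hd Hi Hj H.
assert (Hm : forall m, (m <= pred d)%nat -> (m < d)%nat) by (intros; lia).
assert (Hkk : is_derive (V:=C_R_NormedModule) (kkphi d k phi) z (kkphi d k phi1 z)).
{ unfold kkphi, sumC. apply (der_sum (fun m x => sum_n (fun n => RtoC (k m * k n) * phi m n x)%C (pred d))).
  intros m Hm'. apply (der_sum (fun n x => RtoC (k m * k n) * phi m n x)%C).
  intros n Hn. apply der_cst. apply H; auto. }
assert (Htr : is_derive (V:=C_R_NormedModule) (trC d phi) z (trC d phi1 z)).
{ unfold trC, sumC. apply (der_sum (fun m x => phi m m x)). intros m Hm'; apply H; auto. }
unfold phibar.
apply (is_derive_minus (V:=C_R_NormedModule)).
apply (is_derive_plus (V:=C_R_NormedModule)).
apply (is_derive_minus (V:=C_R_NormedModule)).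
apply (is_derive_minus (V:=C_R_NormedModule)).
- apply H; auto.
- unfold sumC. apply (der_sum (fun m x => RtoC (k i * k m / ksq d k) * phi m j x)%C).
  intros m Hm'. apply der_cst. apply H; auto.
- unfold sumC. apply (der_sum (fun m x => RtoC (k j * k m / ksq d k) * phi m i x)%C).
  intros m Hm'. apply der_cst. apply H; auto.
- apply der_cst; auto.
- apply der_cst. apply (is_derive_minus (V:=C_R_NormedModule)); auto. apply der_cst; auto.
Qed.

Theorem lemma1 (d : nat) (k : nat -> R)
  (phi phi1 phi2 : nat -> nat -> R -> C) :
  (2 <= d)%nat ->
  (exists i, (i < d)%nat /\ k i <> 0) ->
  (* phi_{ij} twice differentiable on (0,oo), with derivatives phi1, phi2 *)
  (forall i j z, (i < d)%nat -> (j < d)%nat -> 0 < z ->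
     is_derive (V := C_R_NormedModule) (phi i j) z (phi1 i j z) /\
     is_derive (V := C_R_NormedModule) (phi1 i j) z (phi2 i j z)) ->
  (* symmetry *)
  (forall i j z, (i < d)%nat -> (j < d)%nat -> 0 < z -> phi i j z = phi j i z) ->
  (* the equation of motion *)
  (forall i j z, (i < d)%nat -> (j < d)%nat -> 0 < z ->
     Es d k (phi i j) (phi1 i j) (phi2 i j) z =
     (- RtoC (k j) * sumC d (fun m => RtoC (k m) * phi i m z)
      - RtoC (k i) * sumC d (fun m => RtoC (k m) * phi m j z)
      + RtoC (k i * k j) * trC d phi z)%C) ->
  (* conclusion: traceless, transverse, and homogeneous equation *)
  (forall z, 0 < z -> trC d (phibar d k phi) z = 0%C) /\
  (forall j z, (j < d)%nat -> 0 < z ->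
     sumC d (fun i => RtoC (k i) * phibar d k phi i j z)%C = 0%C) /\
  (exists psi1 psi2 : nat -> nat -> R -> C,
     forall i j z, (i < d)%nat -> (j < d)%nat -> 0 < z ->
       is_derive (V := C_R_NormedModule) (phibar d k phi i j) z (psi1 i j z) /\
       is_derive (V := C_R_NormedModule) (psi1 i j) z (psi2 i j z) /\
       Es d k (phibar d k phi i j) (psi1 i j) (psi2 i j) z = 0%C).
Proof.
intros Hd Hk Hder Hsym Heom.
split; [|split].
- intros z Hz.
  assert (Hs : forall a b, (a < d)%nat -> (b < d)%nat -> phi a b z = phi b a z) by (intros; apply Hsym; auto).
  rewrite <- (trace_form d k (fun a b => phi a b z) Hd Hs Hk).
  unfold trC, TF. apply sumC_ext'; intros m. apply phibar_form.
- intros j z Hj Hz.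
  assert (Hs : forall a b, (a < d)%nat -> (b < d)%nat -> phi a b z = phi b a z) by (intros; apply Hsym; auto).
  rewrite <- (transverse_form d k (fun a b => phi a b z) Hd Hs Hk j Hj).
  apply sumC_ext'; intros m. now rewrite phibar_form.
- exists (phibar d k phi1), (phibar d k phi2).
  intros i j z Hi Hj Hz.
  split; [|split].
  + apply der_phibar; auto. intros; apply Hder; auto.
  + apply der_phibar; auto. intros; apply Hder; auto.
  + assert (Hs : forall a b, (a < d)%nat -> (b < d)%nat -> phi a b z = phi b a z) by (intros; apply Hsym; auto).
    unfold Es. rewrite !phibar_form.
    rewrite <- (form_lin d k (fun a b => phi2 a b z) (fun a b => phi1 a b z) (fun a b => phi a b z)).
    rewrite (form_ext d k _ (Gf d k (fun a b => phi a b z))).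
    2: lia. 2: exact Hi. 2: exact Hj.
    2: { intros a b Ha Hb.
      pose proof (Heom a b z Ha Hb Hz) as E; unfold Es in E; simpl; rewrite E.
      unfold Gf, AF, TF, trC.
      rewrite (sumC_ext d (fun m => RtoC (k m) * phi a m z)%C (fun m => RtoC (k m) * phi m a z)%C).
      2: lia. 2: { intros; rewrite Hs; auto. }
      rewrite RtoC_mult; ring. }
    apply form_G; auto.
Qed.
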